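(* Let $A \in \mathbb{R}^{m \times n_A}$ and $B \in \mathbb{R}^{m \times n_B}$ with nonzero columns, let $OPT$ be a set of $k$ columns of $B$ maximizing $f_A$ among all $k$-sets of columns of $B$, with $\sigma_{\min}(OPT) > 0$. Let $T_1, \dots, T_\ell$ be any partition of the columns of $B$, let $k' = \frac{32k}{\sigma_{\min}(OPT)}$, let $S_i = \textsc{Greedy}(A, T_i, k')$, and let $$OPT_i^{NS} = \{x \in OPT : x \notin \textsc{Greedy}(A, T_i \cup \{x\}, k')\}.$$ Then $f_A(S_i) \ge \frac{f_A(OPT_i^{NS})}{2}$ for all $i$.
   Context: For a finite set $V$ of vectors in $\mathbb{R}^m$, $\Pi_V$ is the orthogonal projector onto $\mathrm{span}(V)$ and, for a matrix $M$ with $m$ rows, $f_M(V) = \|\Pi_V M\|_F^2$. For a finite set $V$ of nonzero vectors, $\sigma_{\min}(V)$ is the smallest squared singular value of the matrix whose columns are the vectors of $V$ rescaled to unit length. $\textsc{Greedy}(A, C, r)$ (for a set of columns $C$): start with $S = \emptyset$; for $r$ steps (or until $C$ is exhausted), add to $S$ a column $c \in C$ maximizing $f_A(S \cup \{c\})$ (ties broken by a fixed deterministic rule); return $S$. *)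

(* Defs.v *)
From HB Require Import structures.
From mathcomp Require Import all_boot all_order all_algebra.
Set Implicit Arguments. Unset Strict Implicit. Unset Printing Implicit Defensive.
Import Order.TTheory GRing.Theory Num.Theory.
Local Open Scope ring_scope.

Section Defs.
Variables (R : rcfType) (m nA nB : nat).

(* A square matrix whose row space is span{ b_j : j in S } (vectors as rows). *)
Definition span_mx (B : 'M[R]_(m, nB)) (S : {set 'I_nB}) : 'M[R]_m :=
  (\sum_(j in S) <<row j B^T>>)%MS.

Definition proj_mx (B : 'M[R]_(m, nB)) (S : {set 'I_nB}) : 'M[R]_m :=
  let N := row_base (span_mx B S) in N^T *m invmx (N *m N^T) *m N.

Definition frob2 p q (M : 'M[R]_(p, q)) : R := \sum_i \sum_j M i j ^+ 2.

Definition fA (A : 'M[R]_(m, nA)) (B : 'M[R]_(m, nB)) (S : {set 'I_nB}) : R :=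
  frob2 (proj_mx B S *m A).

(* Greedy(A, C, r) with ties broken by least priority pr (pr injective). *)
Definition greedy_cands A B (C S : {set 'I_nB}) : {set 'I_nB} :=
  [set c in C :\: S |
     [forall d in C :\: S, fA A B (d |: S) <= fA A B (c |: S)]].

Definition greedy_step (pr : 'I_nB -> nat) A B (C S : {set 'I_nB}) :=
  let M := greedy_cands A B C S in
  match [pick c in M | [forall d in M, (pr c <= pr d)%N]] with
  | Some c => c |: S
  | None => S
  end.

Definition greedy (pr : 'I_nB -> nat) A B (C : {set 'I_nB}) (r : nat)
  : {set 'I_nB} := iter r (greedy_step pr A B C) set0.

Definition col_norm (B : 'M[R]_(m, nB)) (j : 'I_nB) : R :=
  Num.sqrt (\sum_i B i j ^+ 2).

Definition gram_unit (B : 'M[R]_(m, nB)) (S : {set 'I_nB}) : 'M[R]_(#|S|) :=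
  \matrix_(a, b) ((\sum_i B i (enum_val a) * B i (enum_val b))
                  / (col_norm B (enum_val a) * col_norm B (enum_val b))).

(* s = sigma_min(S): the smallest squared singular value of the matrix of
   unit-normalized columns, i.e. the smallest eigenvalue of its Gram matrix. *)
Definition is_sigma_min (B : 'M[R]_(m, nB)) (S : {set 'I_nB}) (s : R) : Prop :=
  eigenvalue (gram_unit B S) s /\
  forall a, eigenvalue (gram_unit B S) a -> s <= a.

End Defs.

(* Main.v *)
From Pilot Require Import Defs.
From HB Require Import structures.
From mathcomp Require Import all_boot all_order all_algebra.
From mathcomp Require Import ring lra.
From mathcomp Require Import complex.
Set Implicit Arguments. Unset Strict Implicit. Unset Printing Implicit Defensive.
Import Order.TTheory GRing.Theory Num.Theory.
Local Open Scope ring_scope.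
Lemma mxsq_eq0 (R : realDomainType) p q (X : 'M[R]_(p, q)) :
  X *m X^T = 0 -> X = 0.
Proof.
move=> H; apply/matrixP => i j; rewrite mxE.
have /matrixP /(_ i i) := H; rewrite !mxE => /eqP.
rewrite psumr_eq0; last by move=> k _; rewrite mxE -expr2 sqr_ge0.
move=> /allP /(_ j) /=; rewrite mem_index_enum mxE -expr2 sqrf_eq0 => /(_ isT).
by move/eqP.
Qed.

Lemma NNt_unit (R : rcfType) p q (N : 'M[R]_(p, q)) :
  row_free N -> N *m N^T \in unitmx.
Proof.
move=> fN; rewrite -row_free_unit -kermx_eq0.
set K := kermx _.
have : K *m (N *m N^T) = 0 by rewrite mulmx_ker.
rewrite mulmxA => H.
have : (K *m N) *m (K *m N)^T = 0 by rewrite trmx_mul mulmxA H mul0mx.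
move/mxsq_eq0/eqP; rewrite mulmx_free_eq0 //.
Qed.

Section Proj.
Variables (R : rcfType) (m nB : nat) (B : 'M[R]_(m, nB)).
Local Notation P S := (Pilot.Defs.proj_mx B S).
Local Notation SP S := (span_mx B S).

Lemma proj_sym (S : {set 'I_nB}) : (P S)^T = P S.
Proof.
rewrite /Pilot.Defs.proj_mx /=; move: (row_base _) => N.
by rewrite !trmx_mul trmxK trmx_inv trmx_mul trmxK mulmxA.
Qed.

Lemma proj_fix (S : {set 'I_nB}) p (w : 'M[R]_(p, m)) : (w <= SP S)%MS -> w *m P S = w.
Proof.
move=> wS; rewrite /Pilot.Defs.proj_mx /=.
set N := row_base _.
have wN : (w <= N)%MS by rewrite eq_row_base.
have E : N *m (N^T *m invmx (N *m N^T) *m N) = N.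
  by rewrite !mulmxA mulmxV ?NNt_unit ?row_base_free // mul1mx.
by rewrite -{1}(mulmxKpV wN) -(mulmxA _ N) E (mulmxKpV wN).
Qed.

Lemma proj_sub (S : {set 'I_nB}) : (P S <= SP S)%MS.
Proof.
rewrite /Pilot.Defs.proj_mx /=.
by rewrite (submx_trans (submxMl _ _)) // eq_row_base.
Qed.

Lemma proj_idem (S : {set 'I_nB}) : P S *m P S = P S.
Proof. by rewrite proj_fix // proj_sub. Qed.

Lemma span_mono (S S' : {set 'I_nB}) : S \subset S' -> (SP S <= SP S')%MS.
Proof.
move=> sub; apply/sumsmx_subP => j jS.
by apply: (sumsmx_sup j); [exact: (subsetP sub) | exact: submx_refl].
Qed.

Lemma row_in_span j (S : {set 'I_nB}) : j \in S -> (row j B^T <= SP S)%MS.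
Proof. by move=> jS; apply: (sumsmx_sup j) => //; rewrite genmxE. Qed.

Lemma proj_mono (S S' : {set 'I_nB}) : S \subset S' -> P S *m P S' = P S.
Proof.
by move=> sub; rewrite proj_fix // (submx_trans (proj_sub S)) // span_mono.
Qed.

Lemma proj_mono' (S S' : {set 'I_nB}) : S \subset S' -> P S' *m P S = P S.
Proof.
by move=> sub; rewrite -[LHS]trmxK trmx_mul !proj_sym proj_mono // proj_sym.
Qed.

End Proj.
Section Frob.
Variable R : rcfType.

Lemma cs_sum (I : finType) (a b : I -> R) :
  (\sum_i a i * b i) ^+ 2 <= (\sum_i a i ^+ 2) * (\sum_i b i ^+ 2).
Proof.
set al := \sum_i a i ^+ 2; set be := \sum_i a i * b i; set g := \sum_i b i ^+ 2.
have al0 : 0 <= al by apply: sumr_ge0 => i _; rewrite sqr_ge0.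
have E : \sum_i (al * b i - be * a i) ^+ 2 = al * (al * g - be ^+ 2).
  have -> : \sum_i (al * b i - be * a i) ^+ 2 =
     \sum_i (al ^+ 2 * b i ^+ 2 - (2%:R * al * be) * (a i * b i) + be ^+ 2 * a i ^+ 2).
    by apply: eq_bigr => i _; ring.
  rewrite big_split sumrB /= -!mulr_sumr -/al -/be -/g; ring.
have H : 0 <= al * (al * g - be ^+ 2).
  by rewrite -E; apply: sumr_ge0 => i _; rewrite sqr_ge0.
have [al_gt0|] := ltrP 0 al.
  by rewrite -subr_ge0; rewrite pmulr_rge0 in H.
move=> al_le0; have al_eq0 : al = 0 by apply/eqP; rewrite eq_le al_le0 al0.
have a0 : forall i, a i = 0.
  move=> i; apply/eqP; rewrite -sqrf_eq0; apply/eqP.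
  move: al_eq0; rewrite /al => /eqP; rewrite psumr_eq0; last by move=> j _; rewrite sqr_ge0.
  by move=> /allP /(_ i (mem_index_enum _)) /= /eqP.
have -> : be = 0 by rewrite /be big1 // => i _; rewrite a0 mul0r.
by rewrite al_eq0 expr0n /= mul0r.
Qed.

Lemma frob2_tr p q (M : 'M[R]_(p, q)) : frob2 M = \tr (M *m M^T).
Proof.
rewrite /frob2 /mxtrace; apply: eq_bigr => i _; rewrite mxE.
by apply: eq_bigr => j _; rewrite mxE expr2.
Qed.

Lemma frob2_ge0 p q (M : 'M[R]_(p, q)) : 0 <= frob2 M.
Proof. by apply: sumr_ge0 => i _; apply: sumr_ge0 => j _; rewrite sqr_ge0. Qed.

Lemma frob2_proj n q (Q : 'M[R]_n) (Y : 'M[R]_(n, q)) :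
  Q^T = Q -> Q *m Q = Q -> frob2 (Q *m Y) = \tr (Q *m (Y *m Y^T)).
Proof.
move=> Qs Qi; rewrite frob2_tr trmx_mul Qs mulmxA mxtrace_mulC !mulmxA.
rewrite -(mulmxA _ Q Q) Qi mxtrace_mulC mulmxA mxtrace_mulC.
by rewrite mulmxA.
Qed.

Lemma frob2_contract n q (Q : 'M[R]_n) (Y : 'M[R]_(n, q)) :
  Q^T = Q -> Q *m Q = Q -> frob2 (Q *m Y) <= frob2 Y.
Proof.
move=> Qs Qi.
have Q's : (1%:M - Q)^T = 1%:M - Q by rewrite linearB /= trmx1 Qs.
have Q'i : (1%:M - Q) *m (1%:M - Q) = 1%:M - Q.
  by rewrite mulmxBl mul1mx mulmxBr mulmx1 Qi subrr subr0.
have := frob2_ge0 ((1%:M - Q) *m Y).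
rewrite frob2_proj // mulmxBl mul1mx linearB /= -frob2_tr -frob2_proj //.
by rewrite subr_ge0.
Qed.

Lemma cs_row p q (u : 'rV[R]_p) (Y : 'M[R]_(p, q)) :
  frob2 (u *m Y) <= (u *m u^T) 0 0 * frob2 Y.
Proof.
rewrite /frob2 big_ord1 [X in _ <= _ * X]exchange_big /= mulr_sumr.
apply: ler_sum => j _; rewrite !mxE.
have -> : \sum_j0 u 0 j0 * u^T j0 0 = \sum_j0 u 0 j0 ^+ 2.
  by apply: eq_bigr => i _; rewrite mxE expr2.
exact: cs_sum.
Qed.

End Frob.

Section Gain.
Variables (R : rcfType) (m nA nB : nat) (A : 'M[R]_(m, nA)) (B : 'M[R]_(m, nB)).
Local Notation P S := (Pilot.Defs.proj_mx B S).
Local Notation SP S := (span_mx B S).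

Lemma tr11 (M : 'M[R]_1) : \tr M = M 0 0.
Proof. by rewrite /mxtrace big_ord1. Qed.

Lemma fA_tr (S : {set 'I_nB}) : fA A B S = \tr (P S *m (A *m A^T)).
Proof. by rewrite /fA frob2_proj ?proj_sym ?proj_idem. Qed.

Lemma gain_lb (S S' : {set 'I_nB}) (u0 : 'rV[R]_m) :
  S \subset S' -> (u0 <= SP S')%MS -> (u0 *m u0^T) 0 0 <= 1 ->
  frob2 (u0 *m (1%:M - P S) *m A) <= fA A B S' - fA A B S.
Proof.
move=> sub u0S' u0n.
have PP' := proj_mono B sub; have P'P := proj_mono' B sub.
set Q := P S' - P S.
have Qs : Q^T = Q by rewrite /Q linearB /= !proj_sym.
have Qi : Q *m Q = Q.
  by rewrite /Q mulmxBl !mulmxBr !proj_idem PP' P'P subrr subr0.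
have -> : fA A B S' - fA A B S = frob2 (Q *m A).
  by rewrite !fA_tr frob2_proj // /Q mulmxBl linearB.
set u := u0 *m (1%:M - P S).
have uQ : u *m Q = u.
  have E : (1%:M - P S) *m (P S' - P S) = P S' - P S.
    by rewrite mulmxBl mul1mx !mulmxBr proj_idem PP' subrr subr0.
  by rewrite /u /Q -mulmxA E mulmxBr (proj_fix u0S') mulmxBr mulmx1.
have -> : u *m A = u *m (Q *m A) by rewrite mulmxA uQ.
apply: (le_trans (cs_row _ _)).
rewrite -[X in _ <= X]mul1r ler_wpM2r ?frob2_ge0 //.
have -> : u *m u^T = u0 *m u0^T - (u0 *m P S) *m (u0 *m P S)^T.
  rewrite /u; move: (P S) (proj_sym B S) (proj_idem B S) => Pm Ps Pi.
  have It : (1%:M - Pm)^T = 1%:M - Pm by rewrite linearB /= trmx1 Ps.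
  have Ii : (1%:M - Pm) *m (1%:M - Pm) = 1%:M - Pm.
    by rewrite mulmxBl mul1mx mulmxBr mulmx1 Pi subrr subr0.
  rewrite !trmx_mul It Ps !mulmxA -(mulmxA u0 (1%:M - Pm)) Ii.
  by rewrite -(mulmxA u0 Pm) Pi mulmxBr mulmx1 mulmxBl.
rewrite mxE (le_trans _ u0n) // mxE gerDl mxE oppr_le0.
by rewrite -tr11 -frob2_tr frob2_ge0.
Qed.

End Gain.

Section L2.
Variables (R : rcfType) (m nB : nat) (B : 'M[R]_(m, nB)).
Hypothesis hB : forall j, col j B != 0.
Local Notation P S := (Pilot.Defs.proj_mx B S).
Local Notation SP S := (span_mx B S).

Definition xhat j : 'rV[R]_m := (col_norm B j)^-1 *: row j B^T.

Lemma col_norm_gt0 j : 0 < col_norm B j.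
Proof.
rewrite /col_norm sqrtr_gt0 lt_def sumr_ge0 ?andbT; last by move=> i _; rewrite sqr_ge0.
rewrite psumr_eq0; last by move=> i _; rewrite sqr_ge0.
apply/negP => /allP H; move/negP: (hB j); apply; apply/eqP/matrixP => i k.
rewrite ord1 !mxE; apply/eqP; rewrite -sqrf_eq0.
by have := H i (mem_index_enum _).
Qed.

Lemma col_norm_sq j : col_norm B j ^+ 2 = \sum_i B i j ^+ 2.
Proof. by rewrite /col_norm sqr_sqrtr // sumr_ge0 // => i _; rewrite sqr_ge0. Qed.

Lemma xhat_entry j i : xhat j 0 i = B i j / col_norm B j.
Proof. by rewrite !mxE mulrC. Qed.

Lemma xhat_dot j k : (xhat j *m (xhat k)^T) 0 0 =
  (\sum_i B i j * B i k) / (col_norm B j * col_norm B k).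
Proof.
rewrite !mxE mulr_suml; apply: eq_bigr => i _.
rewrite !mxE.
have := col_norm_gt0 j; have := col_norm_gt0 k.
move: (col_norm B j) (col_norm B k) => a b a0 b0.
rewrite invfM; ring.
Qed.

Lemma xhat_norm j : (xhat j *m (xhat j)^T) 0 0 = 1.
Proof.
rewrite xhat_dot -expr2 col_norm_sq.
have -> : \sum_i B i j * B i j = \sum_i B i j ^+ 2 by apply: eq_bigr => i _; rewrite expr2.
rewrite divff // -col_norm_sq sqrf_eq0 gt_eqF //; exact: col_norm_gt0.
Qed.

Lemma xhat_span j (S : {set 'I_nB}) : j \in S -> (xhat j <= SP S)%MS.
Proof. by move=> jS; rewrite scalemx_sub // row_in_span. Qed.

Lemma sum_in_set (S : {set 'I_nB}) (F : 'I_nB -> R) :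
  (forall x, x \notin S -> F x = 0) -> \sum_x F x = \sum_(x in S) F x.
Proof.
move=> H; rewrite (bigID (mem S)) /= [X in _ + X]big1 ?addr0 // => x /= xS; rewrite H.

Qed.

Lemma L2v (OPT O : {set 'I_nB}) (s : R) :
  0 < s ->
  (forall v : 'rV_#|OPT|, s * (v *m v^T) 0 0 <= (v *m gram_unit B OPT *m v^T) 0 0) ->
  O \subset OPT -> forall w : 'rV_m, (w <= SP O)%MS ->
  s * (w *m w^T) 0 0 <= \sum_(x in O) ((xhat x *m w^T) 0 0) ^+ 2.
Proof.
move=> s0 Ray sub w wO.
have [u_ wE] := sub_sumsmxP wO.
have H : forall j, exists a, u_ j *m (<<row j B^T>>)%MS = a *: xhat j.
  move=> j; apply/sub_rVP.
  have -> : (xhat j :=: row j B^T)%MS.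
    apply: eqmx_scale; rewrite invr_eq0 gt_eqF //; exact: col_norm_gt0.
  by rewrite -(genmxE (row j B^T)) submxMl.
have [a aE] := fin_all_exists H.
pose c x := if x \in O then a x else 0.
have cO : forall x, x \notin O -> c x = 0 by move=> x /negbTE; rewrite /c => ->.
have cOPT : forall x, x \notin OPT -> c x = 0.
  by move=> x xn; apply: cO; apply: contra xn; apply: (subsetP sub).
have wc : w = \sum_x c x *: xhat x.
  rewrite wE big_mkcond; apply: eq_bigr => x _; rewrite /c.
  by case: (x \in O); rewrite ?aE ?scale0r.
pose Y : 'M[R]_(#|OPT|, m) := \matrix_(k, i) xhat (enum_val k) 0 i.
pose v : 'rV[R]_#|OPT| := \row_k c (enum_val k).
have G : gram_unit B OPT = Y *m Y^T.
  apply/matrixP => k l; rewrite /gram_unit mxE -xhat_dot !mxE.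
  by apply: eq_bigr => i _; rewrite !mxE.
have wv : w = v *m Y.
  apply/rowP => i; rewrite wc summxE !mxE.
  rewrite (sum_in_set (S := OPT)); last by move=> x xn; rewrite mxE cOPT // mul0r.
  rewrite big_enum_val; apply: eq_bigr => k _; rewrite !mxE.
  by [].
have vv : (v *m v^T) 0 0 = \sum_(x in O) c x ^+ 2.
  rewrite -(sum_in_set (S := O)); last by move=> x xn; rewrite cO // expr0n.
  rewrite (sum_in_set (S := OPT)); last by move=> x xn; rewrite cOPT // expr0n.
  by rewrite big_enum_val !mxE; apply: eq_bigr => k _; rewrite !mxE expr2.
have qE : (w *m w^T) 0 0 = \sum_(x in O) c x * (xhat x *m w^T) 0 0.
  rewrite -(sum_in_set (S := O)); last by move=> x xn; rewrite cO // mul0r.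
  rewrite {1}wc mulmx_suml summxE; apply: eq_bigr => x _.
  by rewrite -scalemxAl mxE.
have H1 : s * \sum_(x in O) c x ^+ 2 <= (w *m w^T) 0 0.
  by rewrite -vv; have := Ray v; rewrite G mulmxA -wv -mulmxA -trmx_mul -wv.
set q := (w *m w^T) 0 0 in qE H1 *.
have H2 : 2%:R * s * q <= s ^+ 2 * \sum_(x in O) c x ^+ 2 + \sum_(x in O) ((xhat x *m w^T) 0 0) ^+ 2.
  rewrite qE mulr_sumr mulr_sumr -big_split /=; apply: ler_sum => x _.
  set g := (xhat x *m w^T) 0 0.
  have := sqr_ge0 (s * c x - g); nra.
have H3 : s ^+ 2 * \sum_(x in O) c x ^+ 2 <= s * q.
  by rewrite expr2 -mulrA ler_wpM2l // ltW.
nra.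
Qed.

End L2.

Section Step.
Variables (R : rcfType) (m nA nB : nat) (A : 'M[R]_(m, nA)) (B : 'M[R]_(m, nB)).
Hypothesis hB : forall j, col j B != 0.
Local Notation P S := (Pilot.Defs.proj_mx B S).
Local Notation SP S := (span_mx B S).

Lemma frob2_split (X Y : 'M[R]_(m, nA)) :
  3%:R * frob2 (X + Y) <= 12%:R * frob2 X + 4%:R * frob2 Y.
Proof.
rewrite /frob2 !mulr_sumr -big_split /=; apply: ler_sum => i _.
rewrite !mulr_sumr -big_split /=; apply: ler_sum => j _.
rewrite mxE; have := sqr_ge0 (3%:R * X i j - Y i j); nra.
Qed.

Lemma L2mat (OPT O : {set 'I_nB}) (s : R) (M : 'M[R]_(m, nA)) :
  0 < s ->
  (forall v : 'rV_#|OPT|, s * (v *m v^T) 0 0 <= (v *m gram_unit B OPT *m v^T) 0 0) ->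
  O \subset OPT ->
  s * frob2 (P O *m M) <= \sum_(x in O) frob2 (xhat B x *m M).
Proof.
move=> s0 Ray sub.
set W := P O *m M.
have xW : forall x, x \in O -> xhat B x *m W = xhat B x *m M.
  by move=> x xO; rewrite /W mulmxA proj_fix // xhat_span.
have -> : \sum_(x in O) frob2 (xhat B x *m M) =
          \sum_j \sum_(x in O) ((xhat B x *m W) 0 j) ^+ 2.
  rewrite [RHS]exchange_big /=; apply: eq_bigr => x xO.
  by rewrite /frob2 big_ord1 xW.
have -> : frob2 W = \sum_j ((row j W^T) *m (row j W^T)^T) 0 0.
  rewrite /frob2 exchange_big /=; apply: eq_bigr => j _.
  by rewrite mxE; apply: eq_bigr => i _; rewrite !mxE expr2.
rewrite mulr_sumr; apply: ler_sum => j _.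
have wO : (row j W^T <= SP O)%MS.
  rewrite /W trmx_mul proj_sym row_mul.
  exact: (submx_trans (submxMl _ _) (proj_sub B O)).
apply: (le_trans (L2v hB s0 Ray sub wO)).
apply: ler_sum => x _; rewrite !mxE.
suff -> : \sum_j0 xhat B x 0 j0 * (row j W^T)^T j0 0 = \sum_j0 xhat B x 0 j0 * W j0 j by [].
by apply: eq_bigr => i _; rewrite !mxE.
Qed.

Lemma step_ineq (OPT O S : {set 'I_nB}) (s g' : R) :
  0 < s ->
  (forall v : 'rV_#|OPT|, s * (v *m v^T) 0 0 <= (v *m gram_unit B OPT *m v^T) 0 0) ->
  O \subset OPT ->
  (forall x, x \in O -> fA A B (x |: S) <= g') ->
  s * (3%:R * fA A B O - 4%:R * fA A B S) <= 12%:R * #|O|%:R * (g' - fA A B S).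
Proof.
move=> s0 Ray sub hg.
set M := (1%:M - P S) *m A.
have H1 : forall x, x \in O -> frob2 (xhat B x *m M) <= g' - fA A B S.
  move=> x xO; rewrite /M mulmxA.
  have := @gain_lb _ _ _ _ A B S (x |: S) (xhat B x) (subsetUr _ _)
     (xhat_span B (setU11 x S)).
  rewrite xhat_norm // lexx => /(_ isT) h; apply: (le_trans h).
  by rewrite lerD2r hg.
have H2 : \sum_(x in O) frob2 (xhat B x *m M) <= #|O|%:R * (g' - fA A B S).
  by rewrite mulr_natl -sumr_const; apply: ler_sum.
have H3 := L2mat M s0 Ray sub.
have H4 : 3%:R * fA A B O <= 12%:R * frob2 (P O *m M) + 4%:R * fA A B S.
  have E : P O *m A = P O *m M + P O *m (P S *m A).
    by rewrite -mulmxDr /M mulmxBl mul1mx subrK.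
  rewrite /fA E; apply: (le_trans (frob2_split _ _)).
  rewrite lerD2l ler_wpM2l ?ler0n //.
  by apply: frob2_contract; [exact: proj_sym | exact: proj_idem].
have F0 := frob2_ge0 (P O *m M).
nra.
Qed.

End Step.
Section Greedy.
Variables (R : rcfType) (m nA nB : nat) (A : 'M[R]_(m, nA)) (B : 'M[R]_(m, nB)).
Variables (pr : 'I_nB -> nat) (pr_inj : injective pr).
Local Notation f := (fA A B).
Local Notation step := (greedy_step pr A B).

Lemma step_sub (C S : {set 'I_nB}) : S \subset step C S.
Proof.
rewrite /greedy_step; case: pickP => [c _|_] //; exact: subsetUr.
Qed.

Lemma iter_mono (C : {set 'I_nB}) j j' : (j <= j')%N ->
  iter j (step C) set0 \subset iter j' (step C) set0.
Proof.
move=> /subnK <-; elim: (j' - j)%N => [|k IH] //=.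
by apply: subset_trans IH (step_sub _ _).
Qed.

Lemma step_key (T S : {set 'I_nB}) x : x \notin S -> x \notin step (x |: T) S ->
  step (x |: T) S = step T S /\ f (x |: S) <= f (step T S).
Proof.
move=> xS xn.
set D' := (x |: T) :\: S.
have xD' : x \in D' by rewrite inE xS setU11.
case: (arg_maxP (fun c => f (c |: S)) xD') => c0 c0D' c0max.
have c0M' : c0 \in greedy_cands A B (x |: T) S.
  by rewrite inE; apply/andP; split => //; apply/forall_inP => d dD'; exact: c0max.
case: (arg_minnP pr c0M') => c1 c1M' c1min.
move: xn; rewrite /greedy_step; case: pickP => [c /andP [cM' /forall_inP cmin] | none]; last first.
  have := none c1 => /negbT /nandP [] /negP []; first exact: c1M'.
  by apply/forall_inP => d dM'; exact: c1min.
rewrite in_setU1 negb_or => /andP [xc _].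
move: (cM'); rewrite inE => /andP [cD' /forall_inP cmax].
have cTS : c \in T :\: S.
  by move: cD'; rewrite !inE eq_sym (negbTE xc) /=.
have sub : T :\: S \subset D' by apply: setSD; exact: subsetUr.
have cM : c \in greedy_cands A B T S.
  rewrite inE cTS /=; apply/forall_inP => d dTS; apply: cmax.
  exact: (subsetP sub).
have MM' : forall d, d \in greedy_cands A B T S -> d \in greedy_cands A B (x |: T) S.
  move=> d; rewrite inE => /andP [dTS /forall_inP dmax].
  rewrite inE; apply/andP; split; first exact: (subsetP sub).
  apply/forall_inP => e eD'.
  case: (eqVneq e x) => [->|ex].
    apply: (le_trans (cmax x xD')); exact: dmax.
  apply: dmax; move: eD'; rewrite !inE (negbTE ex) //.
case: pickP => [c' /andP [c'M /forall_inP c'min] | none]; last first.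
  have := none c => /negbT /nandP [] /negP []; first exact: cM.
  by apply/forall_inP => d dM; apply: cmin; apply: MM'.
have -> : c' = c.
  apply: pr_inj; apply/eqP; rewrite eqn_leq c'min //= cmin //; exact: MM'.
split => //; exact: cmax.
Qed.

End Greedy.

Section Run.
Variables (R : rcfType) (m nA nB : nat) (A : 'M[R]_(m, nA)) (B : 'M[R]_(m, nB)).
Variables (pr : 'I_nB -> nat) (pr_inj : injective pr).
Local Notation f := (fA A B).
Local Notation step := (greedy_step pr A B).

Lemma f_mono (S S' : {set 'I_nB}) : S \subset S' -> f S <= f S'.
Proof.
move=> sub; have := @gain_lb _ _ _ _ A B S S' 0 sub (sub0mx _ _).
rewrite mul0mx mxE ler01 => /(_ isT); rewrite !mul0mx => h.
by rewrite -subr_ge0; apply: le_trans (frob2_ge0 _) h.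
Qed.

Lemma run_gain (T : {set 'I_nB}) x k' :
  x \notin greedy pr A B (x |: T) k' ->
  forall j, (j < k')%N ->
  f (x |: iter j (step T) set0) <= f (iter j.+1 (step T) set0).
Proof.
move=> xn.
have xH : forall j, (j <= k')%N -> x \notin iter j (step (x |: T)) set0.
  move=> j jk; apply: contra xn; apply: (subsetP (iter_mono _ _ _ _ jk)).
have HG : forall j, (j <= k')%N -> iter j (step (x |: T)) set0 = iter j (step T) set0.
  elim => [|j IH] // jk.
  have jk' : (j <= k')%N by apply: ltnW.
  have h1 : x \notin iter j (step T) set0 by rewrite -IH // xH.
  have h2 : x \notin step (x |: T) (iter j (step T) set0).
    by rewrite -IH // -/(iter j.+1 _ _) xH.
  by rewrite /= IH //; case: (step_key pr_inj h1 h2).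
move=> j jk.
have jk' : (j <= k')%N by apply: ltnW.
have h1 : x \notin iter j (step T) set0 by rewrite -HG // xH.
have h2 : x \notin step (x |: T) (iter j (step T) set0).
  by rewrite -HG // -/(iter j.+1 _ _) xH.
by rewrite /=; case: (step_key pr_inj h1 h2).
Qed.

End Run.

Section Ray.
Local Open Scope sesquilinear_scope.
Lemma toC_real (R : rcfType) (x : R) : real_complex R x \is Num.real.
Proof. by rewrite complex_real. Qed.

Lemma map_mx00 (T U : Type) (f : T -> U) (M : 'M[T]_1) : f (M 0 0) = (map_mx f M) 0 0.
Proof. by rewrite mxE. Qed.

Lemma rayleigh (R : rcfType) n (G : 'M[R]_n) (s : R) :
  G^T = G -> (forall a, eigenvalue G a -> s <= a) ->
  forall v : 'rV_n, s * (v *m v^T) 0 0 <= (v *m G *m v^T) 0 0.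
Proof.
move=> Gsym Hs v.
pose toC : {rmorphism R -> R[i]} := real_complex R.
pose Gc := map_mx toC G.
have Gct : Gc ^t* = Gc.
  by apply/matrixP => i j; rewrite !mxE conj_Creal ?toC_real // -{2}Gsym mxE.
have Gn : Gc \is normalmx by apply/normalmxP; rewrite Gct.
have Gh : Gc \is hermsymmx.
  by apply/is_hermitianmxP; rewrite expr0 scale1r Gct.
have /orthomx_spectralP Geq := Gn.
set P := spectralmx Gc in Geq; set d := spectral_diag Gc in Geq.
have Pu : P \is unitarymx := spectral_unitarymx Gc.
have dreal := hermitian_spectral_diag_real Gh.
rewrite invmx_unitary // in Geq.
have PtP : P^t* *m P = 1%:M.
  by rewrite -invmx_unitary // mulVmx // spectral_unit.
have PPt : P *m P^t* = 1%:M by apply/unitarymxP.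
have deig : forall j, toC s <= d 0 j.
  move=> j.
  have dr : d 0 j \is Num.real by apply: (mxOverP dreal).
  have [r dr'] := complex_realP _ dr.
  rewrite dr' lecR; apply: Hs.
  rewrite -(eigenvalue_map toC) -/Gc.
  suff : eigenvalue Gc (d 0 j) by rewrite dr'.
  apply/eigenvalueP; exists (row j P).
    rewrite Geq !mulmxA -!row_mul PPt mul1mx row_mul row_diag_mx.
    by rewrite -scalemxAl -rowE.
  apply/negP => /eqP H0.
  have := congr1 (fun M : 'rV[R[i]]_n => M 0 j) (row_mul j P (P^t*)).
  by rewrite H0 mul0mx PPt !mxE eqxx /= => /eqP; rewrite oner_eq0.
pose vc := map_mx toC v.
have vct : vc ^t* = map_mx toC v^T.
  by apply/matrixP => i j; rewrite !mxE conj_Creal ?toC_real.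
pose w := vc *m P^t*.
have wt : P *m vc^t* = w^t*.
  by rewrite /w trmx_mul map_mxM trmxCK.
have key1 : toC ((v *m G *m v^T) 0 0) = (w *m diag_mx d *m w^t*) 0 0.
  rewrite (map_mx00 toC) !map_mxM -/vc -/Gc -vct Geq !mulmxA -wt.
  by rewrite /w !mulmxA.
have key2 : toC ((v *m v^T) 0 0) = (w *m w^t*) 0 0.
  rewrite (map_mx00 toC) !map_mxM -/vc -vct /w trmx_mul map_mxM trmxCK.
  by rewrite mulmxA -(mulmxA vc) PtP mulmx1.
rewrite -(lecR (R:=R)) rmorphM /=.
rewrite -[X in _ <= X]/(toC _) -[X in _ * X <= _]/(toC _) key1 key2.
clearbody w; rewrite mul_mx_diag !mxE mulr_sumr; apply: ler_sum => j _.
rewrite !mxE mulrAC [X in _ <= X]mulrC -subr_ge0 -mulrBl.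
by apply: mulr_ge0; [rewrite subr_ge0; apply: deig | apply: mul_conjC_ge0].
Qed.
End Ray.

Lemma gram_sym (R : rcfType) m nB (B : 'M[R]_(m, nB)) (S : {set 'I_nB}) :
  (gram_unit B S)^T = gram_unit B S.
Proof.
apply/matrixP => a b; rewrite !mxE [_ * col_norm _ _]mulrC; congr (_ / _).
by apply: eq_bigr => i _; rewrite mulrC.
Qed.

Unset Implicit Arguments.
Set Strict Implicit.

Theorem lemma3 (R : rcfType) (m nA nB : nat)
  (A : 'M[R]_(m, nA)) (B : 'M[R]_(m, nB))
  (pr : 'I_nB -> nat) (pr_inj : injective pr)
  (hA : forall j, col j A != 0) (hB : forall j, col j B != 0)
  (k : nat) (OPT : {set 'I_nB})
  (hOPTk : #|OPT| = k)
  (hOPTmax : forall S : {set 'I_nB}, #|S| = k -> fA A B S <= fA A B OPT)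
  (s : R) (hs : is_sigma_min B OPT s) (hspos : 0 < s)
  (l : nat) (T : 'I_l -> {set 'I_nB})
  (hTdisj : forall i j, i != j -> [disjoint T i & T j])
  (hTcov : \bigcup_(i < l) T i = [set: 'I_nB])
  (k' : nat)
  (hk'1 : 32%:R * k%:R / s <= k'%:R) (hk'2 : k'%:R < 32%:R * k%:R / s + 1)
  (i : 'I_l) :
  let S_i := greedy pr A B (T i) k' in
  let OPT_NS := [set x in OPT | x \notin greedy pr A B (x |: T i) k'] in
  fA A B S_i >= fA A B OPT_NS / 2%:R.
Proof.
cbv zeta.
set S_i := greedy pr A B (T i) k'.
set O := [set x in OPT | x \notin greedy pr A B (x |: T i) k'].
have Ray := rayleigh (gram_sym B OPT) hs.2.
pose G j := iter j (greedy_step pr A B (T i)) set0.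
pose g j := fA A B (G j).
have SiE : S_i = G k' by [].
have Osub : O \subset OPT by apply/subsetP => x; rewrite inE => /andP [].
set F := fA A B O.
have F0 : 0 <= F by apply: frob2_ge0.
have g0 : forall j, 0 <= g j by move=> j; apply: frob2_ge0.
have mono : forall j, g j <= g j.+1.
  by move=> j; apply: f_mono; apply: step_sub.
case: (set_0Vmem O) => [O0 | [x0 x0O]].
  have : F <= fA A B S_i by rewrite /F O0; apply: f_mono; apply: sub0set.
  lra.
have Ok : (#|O| <= k)%N by rewrite -hOPTk subset_leq_card.
have O1 : (0 < #|O|)%N by apply/card_gt0P; exists x0.
have k1 : (0 < k)%N by apply: leq_trans Ok.
have stp : forall j, (j < k')%N ->
    s * (3%:R * F - 4%:R * g j) <= 12%:R * #|O|%:R * (g j.+1 - g j).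
  move=> j jk; apply: (step_ineq (A:=A) hB hspos Ray Osub) => x.
  rewrite inE => /andP [_ xn]; exact: (run_gain pr_inj xn jk).
have claim : forall j, (j <= k')%N ->
    F <= 2%:R * g j \/ j%:R * s * F <= 12%:R * k%:R * g j.
  elim => [|j IH] jk.
    by right; rewrite mul0r mul0r mulr_ge0 // mulr_ge0 // ler0n.
  have jk' : (j < k')%N by [].
  have := stp j jk'; have := mono j.
  have Okr : #|O|%:R <= k%:R :> R by rewrite ler_nat.
  have := IH (ltnW jk').
  case => [h | h] m1 st.
    by left; lra.
  have [h2|h2] := lerP F (2%:R * g j).
    by left; lra.
  right.
  have e1 : 12%:R * #|O|%:R * (g j.+1 - g j) <= 12%:R * k%:R * (g j.+1 - g j).
    by rewrite ler_wpM2r ?subr_ge0 // ler_wpM2l // ler0n.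
  have e2 : s * F <= s * (3%:R * F - 4%:R * g j).
    by rewrite ler_wpM2l ?ltW //; lra.
  have e4 := le_trans e2 (le_trans st e1).
  have -> : (j.+1)%:R = j%:R + 1 :> R by rewrite -addn1 natrD.
  rewrite mulrDl mulrDl mul1r.
  have -> : 12%:R * k%:R * g j.+1 = 12%:R * k%:R * g j + 12%:R * k%:R * (g j.+1 - g j) by ring.
  exact: lerD.
have kk : 32%:R * k%:R <= k'%:R * s.
  by rewrite -ler_pdivrMr // mulrC.
have kpos : 0 < k%:R :> R by rewrite ltr0n.
case: (claim k' (leqnn _)) => h; rewrite SiE -/(g k').
  lra.
have e3 : 32%:R * k%:R * F <= k'%:R * s * F by rewrite ler_wpM2r.
nra.
Qed.
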